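(* Let $A\in\mathcal A_n$ and $i<j$, $k<l$ in $[n]$. If $R_{ij}^{kl}\in E(A)$, then $\widetilde A+\widetilde R_{ij}^{kl}$ is the corner sum matrix of a (unique) ASM in $\mathcal A_n$; if $R_{ij}^{kl}\in E^*(A)$, then $\widetilde A-\widetilde R_{ij}^{kl}$ is the corner sum matrix of a (unique) ASM in $\mathcal A_n$. Moreover the operator $r_{ij}^{kl}$ is an involution: $r_{ij}^{kl}(r_{ij}^{kl}(A))=A$ for all $A\in\mathcal A_n$.
   Context: An $n\times n$ matrix $A=(a_{ij})$ is an alternating sign matrix (ASM) if all $a_{ij}\in\{-1,0,1\}$, all partial row sums $\sum_{k\le j}a_{ik}$ and partial column sums $\sum_{k\le i}a_{kj}$ lie in $\{0,1\}$, and every full row sum and column sum equals $1$; $\mathcal A_n$ is the set of $n\times n$ ASMs. The corner sum matrix is $\widetilde A(i,j)=\sum_{p\le i,q\le j}a_{pq}$, with $\widetilde A(i,j)=0$ if $i=0$ or $j=0$. For $i<j$, $k<l$ in $[n]$, $R_{ij}^{kl}=\{(p,q): i\le p<j,\ k\le q<l\}$ and $\widetilde R_{ij}^{kl}$ is the $n\times n$ $0/1$ matrix with $1$ exactly at positions in $R_{ij}^{kl}$. $E(A)$ is the set of essential rectangles of $A$: those $R_{ij}^{kl}$ such that for all $(p,q)\in R_{ij}^{kl}$: $\widetilde A(p,k)=\widetilde A(p,k-1)$, $\widetilde A(p,l)=\widetilde A(p,l-1)+1$, $\widetilde A(i,q)=\widetilde A(i-1,q)$, $\widetilde A(j,q)=\widetilde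 A(j-1,q)+1$. $E^*(A)$ is the set of dual essential rectangles: those $R_{ij}^{kl}$ such that for all $(p,q)\in R_{ij}^{kl}$: $\widetilde A(p,k)=\widetilde A(p,k-1)+1$, $\widetilde A(p,l)=\widetilde A(p,l-1)$, $\widetilde A(i,q)=\widetilde A(i-1,q)+1$, $\widetilde A(j,q)=\widetilde A(j-1,q)$. The rectangular operator $r_{ij}^{kl}:\mathcal A_n\to\mathcal A_n$ sends $A$ to the ASM whose corner sum matrix is $\widetilde A+\widetilde R_{ij}^{kl}$ if $R_{ij}^{kl}\in E(A)$, $\widetilde A-\widetilde R_{ij}^{kl}$ if $R_{ij}^{kl}\in E^*(A)$, and $\widetilde A$ otherwise. *)

(* Defs.v *)
From HB Require Import structures.
From mathcomp Require Import all_boot all_order all_algebra.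
Set Implicit Arguments. Unset Strict Implicit. Unset Printing Implicit Defensive.
Import Order.TTheory GRing.Theory Num.Theory.
Local Open Scope ring_scope.

(* Conventions: the paper's index set [n] = {1,...,n}; the entry a_{pq}
   (1-based) is stored as A (p-1) (q-1) for A : 'M[int]_n (0-based ordinals). *)

Definition is_asm (n : nat) (A : 'M[int]_n) : Prop :=
  [/\ (forall p q : 'I_n, A p q \in [:: -1; 0; 1]),
      (forall p q : 'I_n, \sum_(q' < n | (q' <= q)%N) A p q' \in [:: 0; 1]),
      (forall p q : 'I_n, \sum_(p' < n | (p' <= p)%N) A p' q \in [:: 0; 1]),
      (forall p : 'I_n, \sum_(q < n) A p q = 1) &
      (forall q : 'I_n, \sum_(p < n) A p q = 1)].

(* Corner sum  Atil(i,j) = sum_{p <= i, q <= j} a_{pq}  (1-based i, j);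
   it is 0 when i = 0 or j = 0. *)
Definition cs (n : nat) (A : 'M[int]_n) (i j : nat) : int :=
  \sum_(p < n | (p < i)%N) \sum_(q < n | (q < j)%N) A p q.

Definition csm (n : nat) (A : 'M[int]_n) : 'M[int]_n :=
  \matrix_(p < n, q < n) cs A p.+1 q.+1.

(* Membership of the (1-based) position (p,q) in R_{ij}^{kl}. *)
Definition inR (i j k l p q : nat) : bool :=
  [&& (i <= p)%N, (p < j)%N, (k <= q)%N & (q < l)%N].

Definition Rt (n i j k l : nat) : 'M[int]_n :=
  \matrix_(p < n, q < n) (inR i j k l p.+1 q.+1)%:Z.

Definition essential (n : nat) (A : 'M[int]_n) (i j k l : nat) : bool :=
  [forall p : 'I_n, forall q : 'I_n, inR i j k l p.+1 q.+1 ==>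
    [&& cs A p.+1 k == cs A p.+1 k.-1,
        cs A p.+1 l == cs A p.+1 l.-1 + 1,
        cs A i q.+1 == cs A i.-1 q.+1 &
        cs A j q.+1 == cs A j.-1 q.+1 + 1]].

Definition dual_essential (n : nat) (A : 'M[int]_n) (i j k l : nat) : bool :=
  [forall p : 'I_n, forall q : 'I_n, inR i j k l p.+1 q.+1 ==>
    [&& cs A p.+1 k == cs A p.+1 k.-1 + 1,
        cs A p.+1 l == cs A p.+1 l.-1,
        cs A i q.+1 == cs A i.-1 q.+1 + 1 &
        cs A j q.+1 == cs A j.-1 q.+1]].

(* The matrix whose corner sum function is C (second differences of C). *)
Definition from_cs (n : nat) (C : nat -> nat -> int) : 'M[int]_n :=
  \matrix_(p < n, q < n) (C p.+1 q.+1 - C p q.+1 - C p.+1 q + C p q).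

(* The rectangular operator r_{ij}^{kl}: the matrix whose corner sum matrix is
   Atil + Rtil, Atil - Rtil, or Atil, according to the three cases. *)
Definition rect_op (n i j k l : nat) (A : 'M[int]_n) : 'M[int]_n :=
  let d : int :=
    if essential A i j k l then 1
    else if dual_essential A i j k l then -1 else 0 in
  from_cs n (fun p q => cs A p q + d * (inR i j k l p q)%:Z).

(* Main.v *)
Require Import Defs.
From HB Require Import structures.
From mathcomp Require Import all_boot all_order all_algebra.
From mathcomp Require Import zify.
Import Order.TTheory GRing.Theory Num.Theory.
Local Open Scope ring_scope.
Set Implicit Arguments. Unset Strict Implicit.

Section Aux.
Variable n : nat.

Lemma big_ltS (F : 'I_n -> int) {m} (Hm : (m < n)%N) :
  \sum_(q < n | (q < m.+1)%N) F q = \sum_(q < n | (q < m)%N) F q + F (Ordinal Hm).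
Proof.
rewrite (bigD1 (Ordinal Hm)) //= addrC; congr (_ + _).
apply: eq_bigl => q; rewrite -val_eqE /= ltnS [(q < m)%N]ltn_neqAle andbC //.
Qed.

Lemma big_ltS_ord (F : 'I_n -> int) (m : 'I_n) :
  \sum_(q < n | (q < m.+1)%N) F q = \sum_(q < n | (q < m)%N) F q + F m.
Proof.
rewrite (big_ltS F (ltn_ord m)); congr (_ + F _); exact: val_inj.
Qed.

Lemma big_ge (F : 'I_n -> int) m : (n <= m)%N ->
  \sum_(q < n | (q < m)%N) F q = \sum_(q < n) F q.
Proof. by move=> H; apply: eq_bigl => q; rewrite (leq_trans (ltn_ord q) H). Qed.

Lemma tele (g : nat -> int) m : (m <= n)%N ->
  \sum_(q < n | (q < m)%N) (g q.+1 - g q) = g m - g 0%N.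
Proof.
elim: m => [|m IH] H.
  by rewrite big_pred0 ?subrr // => q; rewrite ltn0.
rewrite (big_ltS (fun q : 'I_n => g q.+1 - g q) H) IH ?(ltnW H) //=.
lia.
Qed.

Lemma cs0l (A : 'M[int]_n) b : cs A 0 b = 0.
Proof. by rewrite /cs big_pred0 // => q; rewrite ltn0. Qed.

Lemma cs0r (A : 'M[int]_n) a : cs A a 0 = 0.
Proof. by rewrite /cs big1 // => p _; rewrite big_pred0 // => q; rewrite ltn0. Qed.

Lemma csSl (A : 'M[int]_n) (p : 'I_n) b :
  cs A p.+1 b = cs A p b + \sum_(q < n | (q < b)%N) A p q.
Proof. by rewrite /cs big_ltS_ord. Qed.

Lemma csSr (A : 'M[int]_n) a (q : 'I_n) :
  cs A a q.+1 = cs A a q + \sum_(p < n | (p < a)%N) A p q.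
Proof.
rewrite /cs -big_split /=; apply: eq_bigr => p _; by rewrite big_ltS_ord.
Qed.

Lemma cs_ge_l (A : 'M[int]_n) a b : (n <= a)%N -> cs A a b = cs A n b.
Proof. by move=> H; rewrite /cs big_ge // [RHS]big_ge. Qed.

Lemma cs_from_cs (C : nat -> nat -> int) a b : (a <= n)%N -> (b <= n)%N ->
  cs (from_cs n C) a b = C a b - C 0%N b - C a 0%N + C 0%N 0%N.
Proof.
elim: a => [|a IH] Ha Hb; first by rewrite cs0l; lia.
rewrite (csSl _ (Ordinal Ha)) /= IH ?(ltnW Ha) //.
rewrite (eq_bigr (fun q : 'I_n => (C a.+1 q.+1 - C a q.+1) - (C a.+1 q - C a q)));
  last by move=> q _; rewrite mxE /=; lia.
rewrite (tele (fun q => C a.+1 q - C a q)) //; lia.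
Qed.

Lemma from_cs_cs (A : 'M[int]_n) : from_cs n (cs A) = A.
Proof.
apply/matrixP => p q; rewrite mxE !csSl !big_ltS_ord; lia.
Qed.

Lemma from_cs_ext (C C' : nat -> nat -> int) :
  (forall a b, (a <= n)%N -> (b <= n)%N -> C a b = C' a b) ->
  from_cs n C = from_cs n C'.
Proof.
move=> H; apply/matrixP => p q; rewrite !mxE.
have hp := ltn_ord p; have hq := ltn_ord q.
by rewrite !H // ltnW.
Qed.

Lemma cs_eq (X Y : 'M[int]_n) : csm X = csm Y ->
  forall a b, (a <= n)%N -> (b <= n)%N -> cs X a b = cs Y a b.
Proof.
move=> H [|a] [|b] Ha Hb; rewrite ?cs0l ?cs0r //.
have := congr1 (fun M : 'M[int]_n => M (Ordinal Ha) (Ordinal Hb)) H.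
by rewrite !mxE.
Qed.

Lemma csm_inj (X Y : 'M[int]_n) : csm X = csm Y -> X = Y.
Proof.
move=> H; rewrite -(from_cs_cs X) -(from_cs_cs Y); apply: from_cs_ext.
exact: cs_eq.
Qed.

Lemma mem01 (x : int) : x = 0 \/ x = 1 -> x \in [:: 0; 1].
Proof. rewrite !inE; lia. Qed.

Lemma mem01' (x : int) : x \in [:: 0; 1] -> x = 0 \/ x = 1.
Proof. rewrite !inE; lia. Qed.

Lemma rowsum (A : 'M[int]_n) (p q : 'I_n) :
  \sum_(q' < n | (q' <= q)%N) A p q' = cs A p.+1 q.+1 - cs A p q.+1.
Proof. by rewrite csSl addrAC subrr add0r. Qed.

Lemma colsum (A : 'M[int]_n) (p q : 'I_n) :
  \sum_(p' < n | (p' <= p)%N) A p' q = cs A p.+1 q.+1 - cs A p.+1 q.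
Proof. by rewrite (csSr _ p.+1) addrAC subrr add0r. Qed.

Lemma rowfull (A : 'M[int]_n) (p : 'I_n) :
  \sum_(q < n) A p q = cs A p.+1 n - cs A p n.
Proof. by rewrite csSl addrAC subrr add0r big_ge. Qed.

Lemma colfull (A : 'M[int]_n) (q : 'I_n) :
  \sum_(p < n) A p q = cs A n q.+1 - cs A n q.
Proof. by rewrite (csSr _ n) addrAC subrr add0r big_ge. Qed.

Lemma asm_facts (A : 'M[int]_n) : is_asm A ->
  [/\ forall p q : 'I_n, cs A p.+1 q.+1 - cs A p q.+1 = 0 \/ cs A p.+1 q.+1 - cs A p q.+1 = 1,
      forall p q : 'I_n, cs A p.+1 q.+1 - cs A p.+1 q = 0 \/ cs A p.+1 q.+1 - cs A p.+1 q = 1,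
      forall p : 'I_n, cs A p.+1 n - cs A p n = 1 &
      forall q : 'I_n, cs A n q.+1 - cs A n q = 1].
Proof.
case=> _ H2 H3 H4 H5; split.
- by move=> p q; apply: mem01'; rewrite -rowsum.
- by move=> p q; apply: mem01'; rewrite -colsum.
- by move=> p; rewrite -rowfull.
- by move=> q; rewrite -colfull.
Qed.

Lemma asm_from_cs (C : nat -> nat -> int) :
 (forall b, C 0%N b = 0) -> (forall a, C a 0%N = 0) ->
 (forall p q : 'I_n, C p.+1 q.+1 - C p q.+1 = 0 \/ C p.+1 q.+1 - C p q.+1 = 1) ->
 (forall p q : 'I_n, C p.+1 q.+1 - C p.+1 q = 0 \/ C p.+1 q.+1 - C p.+1 q = 1) ->
 (forall p : 'I_n, C p.+1 n - C p n = 1) ->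
 (forall q : 'I_n, C n q.+1 - C n q = 1) -> is_asm (from_cs n C).
Proof.
move=> h0 h0' H1 H2 H3 H4.
have csC a b : (a <= n)%N -> (b <= n)%N -> cs (from_cs n C) a b = C a b.
  by move=> Ha Hb; rewrite cs_from_cs // !h0 h0'; lia.
split.
- move=> p q; rewrite mxE; have hp := ltn_ord p.
  case: q => [[|q] Hq] /=; rewrite ?h0'.
    have := H1 p (Ordinal Hq); rewrite /= !inE; lia.
  have := H1 p (Ordinal Hq); have := H1 p (Ordinal (ltnW Hq)); rewrite /= !inE; lia.
- move=> p q; rewrite rowsum !csC ?(ltnW (ltn_ord _)) //; exact: mem01.
- move=> p q; rewrite colsum !csC ?(ltnW (ltn_ord _)) ?(ltn_ord q) //; exact: mem01.
- move=> p; rewrite rowfull !csC ?(ltnW (ltn_ord _)) //.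
- move=> q; rewrite colfull !csC ?(ltnW (ltn_ord _)) //.
Qed.

End Aux.

Ltac boolcase := repeat match goal with |- context [nat_of_bool ?b] =>
  let E := fresh "E" in case E: b end.

Section Main.
Variables (n i j k l : nat).
Hypotheses (Hi : (1 <= i)%N) (Hij : (i < j)%N) (Hjn : (j <= n)%N)
  (Hk : (1 <= k)%N) (Hkl : (k < l)%N) (Hln : (l <= n)%N).

Lemma inR0l b : inR i j k l 0 b = false.
Proof. rewrite /inR; apply/negP; lia. Qed.
Lemma inR0r a : inR i j k l a 0 = false.
Proof. rewrite /inR; apply/negP; lia. Qed.

Definition shift (A : 'M[int]_n) (d : int) :=
  from_cs n (fun a b => cs A a b + d * (inR i j k l a b)%:Z).

Lemma cs_shift (A : 'M[int]_n) (d : int) (a b : nat) : (a <= n)%N -> (b <= n)%N ->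
  cs (shift A d) a b = cs A a b + d * (inR i j k l a b)%:Z.
Proof.
move=> Ha Hb; rewrite cs_from_cs // !cs0l !cs0r !inR0l !inR0r /=; lia.
Qed.

Lemma shiftK (A : 'M[int]_n) (d : int) : shift (shift A d) (- d) = A.
Proof.
rewrite -[RHS](from_cs_cs A); apply: from_cs_ext => a b Ha Hb.
rewrite cs_shift //; lia.
Qed.

Lemma shift0 (A : 'M[int]_n) : shift A 0 = A.
Proof.
rewrite -[RHS](from_cs_cs A); apply: from_cs_ext => a b Ha Hb; lia.
Qed.

Lemma essP (A : 'M[int]_n) : essential A i j k l -> forall p q : 'I_n, inR i j k l p.+1 q.+1 ->
  [/\ cs A p.+1 k = cs A p.+1 k.-1, cs A p.+1 l = cs A p.+1 l.-1 + 1,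
      cs A i q.+1 = cs A i.-1 q.+1 & cs A j q.+1 = cs A j.-1 q.+1 + 1].
Proof.
move=> /forallP H p q Hin; move/forallP: (H p) => /(_ q) /implyP /(_ Hin).
by case/and4P => /eqP ? /eqP ? /eqP ? /eqP ?.
Qed.

Lemma dessP (A : 'M[int]_n) : dual_essential A i j k l -> forall p q : 'I_n, inR i j k l p.+1 q.+1 ->
  [/\ cs A p.+1 k = cs A p.+1 k.-1 + 1, cs A p.+1 l = cs A p.+1 l.-1,
      cs A i q.+1 = cs A i.-1 q.+1 + 1 & cs A j q.+1 = cs A j.-1 q.+1].
Proof.
move=> /forallP H p q Hin; move/forallP: (H p) => /(_ q) /implyP /(_ Hin).
by case/and4P => /eqP ? /eqP ? /eqP ? /eqP ?.
Qed.

Definition oi : 'I_n := Ordinal (leq_ltn_trans (leq_pred i) (leq_trans Hij Hjn)).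
Definition ok : 'I_n := Ordinal (leq_ltn_trans (leq_pred k) (leq_trans Hkl Hln)).

Lemma oiE : (oi : nat).+1 = i. Proof. rewrite /=; lia. Qed.
Lemma okE : (ok : nat).+1 = k. Proof. rewrite /=; lia. Qed.

Definition bnd (A : 'M[int]_n) (s t : int) := forall p q : 'I_n, inR i j k l p.+1 q.+1 ->
  [/\ cs A p.+1 k = cs A p.+1 k.-1 + s, cs A p.+1 l = cs A p.+1 l.-1 + t,
      cs A i q.+1 = cs A i.-1 q.+1 + s & cs A j q.+1 = cs A j.-1 q.+1 + t].

Lemma inR_T a b : (i <= a < j)%N -> (k <= b < l)%N -> (inR i j k l a b)%:Z = 1.
Proof. by rewrite /inR => /andP[-> ->] /andP[-> ->]. Qed.
Arguments inR_T : clear implicits.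

Lemma inR_F a b : ~~ ((i <= a < j) && (k <= b < l))%N -> (inR i j k l a b)%:Z = 0.
Proof. by rewrite /inR -!andbA => /negbTE ->. Qed.
Arguments inR_F : clear implicits.

Lemma shift_asm (A : 'M[int]_n) (d s t : int) : is_asm A ->
  (d = 1 /\ s = 0 /\ t = 1) \/ (d = -1 /\ s = 1 /\ t = 0) ->
  bnd A s t -> is_asm (shift A d).
Proof.
move=> /asm_facts [Arow Acol Arowf Acolf] hd HB.
apply: asm_from_cs.
- by move=> b /=; rewrite cs0l inR0l /=; lia.
- by move=> a /=; rewrite cs0r inR0r /=; lia.
- move=> p q /=.
  have := Arow p q.
  case Hq: (k <= q.+1 < l)%N; last first.
    rewrite !(inR_F p.+1) ?(inR_F p) ?Hq ?andbF //; lia.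
  case: (eqVneq p.+1 i) => [e|ne].
    have hin : inR i j k l p.+1 q.+1 by rewrite /inR; lia.
    case: (HB _ _ hin) => _ _ h _; rewrite -e /= in h.
    rewrite (inR_T p.+1) ?(inR_F p) ?Hq //; lia.
  case: (eqVneq p.+1 j) => [e|ne'].
    have hin : inR i j k l oi.+1 q.+1 by rewrite oiE /inR; lia.
    case: (HB _ _ hin) => _ _ _ h; rewrite -e /= in h.
    rewrite (inR_F p.+1) ?(inR_T p) ?Hq //; lia.
  case Hp: (i <= p < j)%N.
    rewrite (inR_T p.+1) ?(inR_T p) ?Hq //; lia.
  rewrite (inR_F p.+1) ?(inR_F p) ?Hq ?Hp ?andbF //; lia.
- move=> p q /=.
  have := Acol p q.
  case Hp: (i <= p.+1 < j)%N; last first.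
    rewrite !(inR_F p.+1) ?Hp //; lia.
  case: (eqVneq q.+1 k) => [e|ne].
    have hin : inR i j k l p.+1 q.+1 by rewrite /inR; lia.
    case: (HB _ _ hin) => h _ _ _; rewrite -e /= in h.
    rewrite (inR_T p.+1 q.+1) ?(inR_F p.+1 q) ?Hp //; lia.
  case: (eqVneq q.+1 l) => [e|ne'].
    have hin : inR i j k l p.+1 ok.+1 by rewrite okE /inR; lia.
    case: (HB _ _ hin) => _ h _ _; rewrite -e /= in h.
    rewrite (inR_F p.+1 q.+1) ?(inR_T p.+1 q) ?Hp //; lia.
  case Hq: (k <= q < l)%N.
    rewrite (inR_T p.+1 q.+1) ?(inR_T p.+1 q) ?Hp //; lia.
  rewrite (inR_F p.+1 q.+1) ?(inR_F p.+1 q) ?Hq ?Hp ?andbF //; lia.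
- move=> p /=; have := Arowf p.
  rewrite (inR_F p.+1 n) ?(inR_F p n); lia.
- move=> q /=; have := Acolf q.
  rewrite (inR_F n q.+1) ?(inR_F n q); lia.
Qed.

Lemma shift_bnd (A : 'M[int]_n) (d s t : int) :
  bnd A s t -> bnd (shift A d) (s + d) (t - d).
Proof.
move=> HB p q hin; have hp := ltn_ord p; have hq := ltn_ord q.
have hin' := hin; rewrite /inR in hin'.
case: (HB _ _ hin) => h1 h2 h3 h4.
rewrite !cs_shift; try lia.
rewrite (inR_T p.+1 k) ?(inR_F p.+1 k.-1) ?(inR_F p.+1 l) ?(inR_T p.+1 l.-1)
  ?(inR_T i q.+1) ?(inR_F i.-1 q.+1) ?(inR_F j q.+1) ?(inR_T j.-1 q.+1); try lia.
split; lia.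
Qed.

Lemma csm_shift (A : 'M[int]_n) (d : int) :
  csm (shift A d) = csm A + d *: Rt n i j k l.
Proof.
apply/matrixP => p q; rewrite !mxE cs_shift //; exact: ltn_ord.
Qed.

Lemma bnd_ess (A : 'M[int]_n) : bnd A 0 1 <-> essential A i j k l.
Proof.
split.
- move=> HB; apply/forallP => p; apply/forallP => q; apply/implyP => hin.
  case: (HB _ _ hin) => h1 h2 h3 h4; rewrite h1 h2 h3 h4 !addr0 !eqxx //.
- move=> HE p q hin; case: (essP HE hin) => h1 h2 h3 h4; split; lia.
Qed.

Lemma bnd_dess (A : 'M[int]_n) : bnd A 1 0 <-> dual_essential A i j k l.
Proof.
split.
- move=> HB; apply/forallP => p; apply/forallP => q; apply/implyP => hin.
  case: (HB _ _ hin) => h1 h2 h3 h4; rewrite h1 h2 h3 h4 !addr0 !eqxx //.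
- move=> HE p q hin; case: (dessP HE hin) => h1 h2 h3 h4; split; lia.
Qed.

Lemma bnd_excl (A : 'M[int]_n) s t s' t' : bnd A s t -> bnd A s' t' -> s = s'.
Proof.
move=> H1 H2; have hin : inR i j k l oi.+1 ok.+1 by rewrite oiE okE /inR; lia.
case: (H1 _ _ hin) => h _ _ _; case: (H2 _ _ hin) => h' _ _ _; lia.
Qed.

End Main.

Lemma rect_opE n i j k l (A : 'M[int]_n) : rect_op i j k l A =
  shift i j k l A (if essential A i j k l then 1 else if dual_essential A i j k l then -1 else 0).
Proof. by []. Qed.

Theorem mainTheorem2 (n : nat) (A : 'M[int]_n) (i j k l : nat) :
  is_asm A ->
  (1 <= i)%N -> (i < j)%N -> (j <= n)%N ->
  (1 <= k)%N -> (k < l)%N -> (l <= n)%N ->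
  [/\ (essential A i j k l ->
         exists! B : 'M[int]_n, is_asm B /\ csm B = csm A + Rt n i j k l),
      (dual_essential A i j k l ->
         exists! B : 'M[int]_n, is_asm B /\ csm B = csm A - Rt n i j k l) &
      rect_op i j k l (rect_op i j k l A) = A].
Proof.
move=> HA Hi Hij Hjn Hk Hkl Hln; split.
- move=> HE; exists (shift i j k l A 1); split; [split|].
  + apply: (shift_asm Hi Hij Hjn Hk Hkl Hln HA _ (proj2 (bnd_ess Hi Hij Hjn Hk Hkl Hln A) HE)).
    by left.
  + by rewrite csm_shift // scale1r.
  + by move=> B [_ HB]; apply: csm_inj; rewrite HB csm_shift // scale1r.
- move=> HE; exists (shift i j k l A (-1)); split; [split|].
  + apply: (shift_asm Hi Hij Hjn Hk Hkl Hln HA _ (proj2 (bnd_dess Hi Hij Hjn Hk Hkl Hln A) HE)).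
    by right.
  + by rewrite csm_shift // scaleN1r.
  + by move=> B [_ HB]; apply: csm_inj; rewrite HB csm_shift // scaleN1r.
- rewrite [rect_op _ _ _ _ A]rect_opE.
  case HE: (essential A i j k l).
    have HB : bnd i j k l (shift i j k l A 1) 1 0.
      have := shift_bnd Hi Hij Hjn Hk Hkl Hln 1 (proj2 (bnd_ess Hi Hij Hjn Hk Hkl Hln A) HE).
      by rewrite add0r subrr.
    have HE' : essential (shift i j k l A 1) i j k l = false.
      apply/negP => /(bnd_ess Hi Hij Hjn Hk Hkl Hln) H.
      by have := bnd_excl Hi Hij Hjn Hk Hkl Hln HB H.
    rewrite rect_opE HE' (proj1 (bnd_dess Hi Hij Hjn Hk Hkl Hln _) HB).
    exact: (shiftK Hi Hij Hjn Hk Hkl Hln).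
  case HD: (dual_essential A i j k l).
    have HB : bnd i j k l (shift i j k l A (-1)) 0 1.
      have := shift_bnd Hi Hij Hjn Hk Hkl Hln (-1) (proj2 (bnd_dess Hi Hij Hjn Hk Hkl Hln A) HD).
      by rewrite addrN opprK add0r.
    rewrite rect_opE (proj1 (bnd_ess Hi Hij Hjn Hk Hkl Hln _) HB).
    have := shiftK Hi Hij Hjn Hk Hkl Hln A (-1); rewrite opprK; exact.
  rewrite (shift0 Hi Hij Hjn Hk Hkl Hln) rect_opE HE HD; exact: (shift0 Hi Hij Hjn Hk Hkl Hln).
Qed.
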